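(* Let $L<U$ be integers and let $M$ be a counting query which, for every dataset $D$, outputs an integer $M(D)\in\{L,L+1,\dots,U\}$, and which has $\ell_1$-sensitivity $\Delta$ (a positive integer), i.e. $|M(D)-M(D')|\le\Delta$ for all neighboring datasets $D\sim D'$. Let $\epsilon>0$ and let $\epsilon'>0$ be a solution of $\epsilon'+\log g(\epsilon')=\epsilon$, where $$g(\epsilon')=\frac{1+\alpha'-(\alpha')^{d+1}-(\alpha')^{U-L+1-d}}{1-(\alpha')^{U-L+1}},\qquad d=\min\Big\{\Delta,\Big\lceil\tfrac{U-L}{2}\Big\rceil\Big\},\qquad \alpha'=e^{-\epsilon'/\Delta}.$$ The renormalized geometric mechanism outputs $\widetilde M_{\mathrm{RGM}}(D)=M(D)+\delta$, where $\delta$ is drawn from $$\Pr(\delta=k)=\frac{e^{-|k|\epsilon'/\Delta}}{\sum_{l=L-M(D)}^{U-M(D)}e^{-|l|\epsilon'/\Delta}},\qquad k=L-M(D),\,L-M(D)+1,\dots,U-M(D).$$ Then the renormalized geometric mechanism satisfies $\epsilon$-differential privacy.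
   Context: Datasets $D,D'$ with the same number $n$ of individuals are neighboring ($D\sim D'$) if they differ by substitution of a single individual's data. A randomized algorithm $\mathcal{A}$ satisfies $\epsilon$-differential privacy if for all neighboring $D,D'$ and every measurable set $S$ in its range, $\Pr(\mathcal{A}(D)\in S)\le e^{\epsilon}\Pr(\mathcal{A}(D')\in S)$. The $\ell_1$-sensitivity of $M$ is $\Delta(M)=\max_{D\sim D'}|M(D)-M(D')|$. *)

(* Defs.v *)
From Stdlib Require Import Reals ZArith List Classical ClassicalEpsilon.
Open Scope R_scope.

Definition Dataset (X : Type) (n : nat) := {l : list X | length l = n}.

(* Neighboring: same number n of individuals, differ by substitution of
   (at most) a single individual's data. *)
Definition neighboring {X : Type} {n : nat} (D D' : Dataset X n) : Prop :=
  exists i : nat, forall j : nat, j <> i ->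
    nth_error (proj1_sig D) j = nth_error (proj1_sig D') j.

(* Sum of f k over the integers k = a, a+1, ..., b (assumes a <= b). *)
Definition zsum (a b : Z) (f : Z -> R) : R :=
  sum_f_R0 (fun i => f (a + Z.of_nat i)%Z) (Z.to_nat (b - a)).

(* d = min { Delta, ceil((U-L)/2) };  for U - L >= 0, ceil((U-L)/2) = (U-L+1) div 2. *)
Definition rgm_d (L U Delta : Z) : Z := Z.min Delta ((U - L + 1) / 2)%Z.

Definition rgm_g (L U Delta : Z) (eps' : R) : R :=
  let a := exp (- eps' / IZR Delta) in
  let d := rgm_d L U Delta in
  (1 + a - a ^ (Z.to_nat (d + 1)) - a ^ (Z.to_nat (U - L + 1 - d)))
  / (1 - a ^ (Z.to_nat (U - L + 1))).

Definition rgm_noise_pmf (L U Delta : Z) (eps' : R) (m k : Z) : R :=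
  exp (- IZR (Z.abs k) * eps' / IZR Delta)
  / zsum (L - m) (U - m) (fun l => exp (- IZR (Z.abs l) * eps' / IZR Delta)).

(* Pr( M(D) + delta \in S ) where M(D) = m; S an arbitrary set of integers
   (every subset of the discrete output space is measurable). *)
Definition rgm_prob (L U Delta : Z) (eps' : R) (m : Z) (S : Z -> Prop) : R :=
  zsum (L - m) (U - m) (fun k =>
    if excluded_middle_informative (S (m + k)%Z)
    then rgm_noise_pmf L U Delta eps' m k else 0).

(* Main.v *)
Require Import Defs.
From Stdlib Require Import Reals ZArith Lra Lia.
Open Scope R_scope.

Definition Ee (e D x : R) : R := exp (- x * e / D).

Lemma Ee_add e D x y : Ee e D x * Ee e D y = Ee e D (x + y).
Proof. unfold Ee. rewrite <- exp_plus. f_equal. unfold Rdiv. ring. Qed.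

Lemma Ee_ext e D x y : x = y -> Ee e D x = Ee e D y.
Proof. intros ->. reflexivity. Qed.

Lemma Ee_0 e D : Ee e D 0 = 1.
Proof. unfold Ee. rewrite <- exp_0. f_equal. unfold Rdiv. ring. Qed.

Lemma Ee_pos e D x : 0 < Ee e D x.
Proof. unfold Ee. apply exp_pos. Qed.

Lemma Ee_le e D x y : 0 < e -> 0 < D -> x <= y -> Ee e D y <= Ee e D x.
Proof.
  intros He HD Hxy. unfold Ee. destruct (Req_dec x y) as [->|Hne]. lra.
  left. apply exp_increasing. unfold Rdiv.
  assert (0 < e * / D) by (apply Rmult_lt_0_compat; [lra| apply Rinv_0_lt_compat; lra]).
  nra.
Qed.

Lemma Ee_lt e D x y : 0 < e -> 0 < D -> x < y -> Ee e D y < Ee e D x.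
Proof.
  intros He HD Hxy. unfold Ee.
  apply exp_increasing. unfold Rdiv.
  assert (0 < e * / D) by (apply Rmult_lt_0_compat; [lra| apply Rinv_0_lt_compat; lra]).
  nra.
Qed.

Lemma Ee_le1 e D x : 0 < e -> 0 < D -> 0 <= x -> Ee e D x <= 1.
Proof. intros. rewrite <- (Ee_0 e D). apply Ee_le; auto. Qed.
Lemma Ee_ge1 e D x : 0 < e -> 0 < D -> x <= 0 -> 1 <= Ee e D x.
Proof. intros. rewrite <- (Ee_0 e D). apply Ee_le; auto. Qed.
Lemma Ee_lt1 e D x : 0 < e -> 0 < D -> 0 < x -> Ee e D x < 1.
Proof. intros. rewrite <- (Ee_0 e D). apply Ee_lt; auto. Qed.

Definition W e D N q := 1 + Ee e D 1 - Ee e D (q + 1) - Ee e D (N - q + 1).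

Lemma W_sym e D N q : W e D N (N - q) = W e D N q.
Proof. unfold W. rewrite (Ee_ext e D (N - (N - q) + 1) (q + 1)) by ring. ring. Qed.

Lemma W_pos e D N q : 0 < e -> 0 < D -> 0 <= q <= N -> 0 < W e D N q.
Proof.
  intros He HD Hq. unfold W.
  set (a := Ee e D 1).
  assert (E1 : Ee e D (q + 1) = a * Ee e D q) by (unfold a; rewrite Ee_add; apply Ee_ext; ring).
  assert (E2 : Ee e D (N - q + 1) = a * Ee e D (N - q)) by (unfold a; rewrite Ee_add; apply Ee_ext; ring).
  rewrite E1, E2.
  pose proof (Ee_lt1 e D 1 He HD ltac:(lra)).
  pose proof (Ee_pos e D 1).
  pose proof (Ee_le1 e D q He HD ltac:(lra)).
  pose proof (Ee_le1 e D (N - q) He HD ltac:(lra)).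
  fold a in H, H0. nra.
Qed.
Lemma stepB e D N p k : 0 < e -> 0 < D -> 0 <= p -> 0 <= k -> p + k <= N ->
  W e D N (p + k) * W e D N 0 <= W e D N k * W e D N p.
Proof.
  intros He HD Hp Hk Hpk. unfold W.
  set (a := Ee e D 1). set (x := Ee e D p). set (y := Ee e D k).
  set (u := Ee e D (N - p - k)).
  assert (E1 : Ee e D (p + k + 1) = a * x * y).
  { unfold a, x, y. rewrite !Ee_add. apply Ee_ext. ring. }
  assert (E2 : Ee e D (N - (p + k) + 1) = a * u).
  { unfold a, u. rewrite !Ee_add. apply Ee_ext. ring. }
  assert (E3 : Ee e D (0 + 1) = a) by (apply Ee_ext; ring).
  assert (E4 : Ee e D (N - 0 + 1) = a * x * y * u).
  { unfold a, x, y, u. rewrite !Ee_add. apply Ee_ext. ring. }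
  assert (E5 : Ee e D (k + 1) = a * y).
  { unfold a, y. rewrite !Ee_add. apply Ee_ext. ring. }
  assert (E6 : Ee e D (N - k + 1) = a * x * u).
  { unfold a, x, u. rewrite !Ee_add. apply Ee_ext. ring. }
  assert (E7 : Ee e D (p + 1) = a * x).
  { unfold a, x. rewrite !Ee_add. apply Ee_ext. ring. }
  assert (E8 : Ee e D (N - p + 1) = a * y * u).
  { unfold a, y, u. rewrite !Ee_add. apply Ee_ext. ring. }
  rewrite E1, E2, E3, E4, E5, E6, E7, E8.
  assert (Ha1 : a < 1) by (apply Ee_lt1; lra).
  assert (Ha0 : 0 < a) by apply Ee_pos.
  assert (Hx1 : x <= 1) by (apply Ee_le1; lra).
  assert (Hy1 : y <= 1) by (apply Ee_le1; lra).
  assert (Hu1 : u <= 1) by (apply Ee_le1; lra).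
  assert (Hx0 : 0 < x) by apply Ee_pos.
  assert (Hy0 : 0 < y) by apply Ee_pos.
  assert (Hu0 : 0 < u) by apply Ee_pos.
  assert (Hid : (1 + a - a * y - a * x * u) * (1 + a - a * x - a * y * u)
     - (1 + a - a * x * y - a * u) * (1 + a - a - a * x * y * u)
     = a * ((1 - x) * (1 - y)) * (1 + a + u - a * u * (x + y + x * y))) by ring.
  assert (0 <= 1 + a + u - a * u * (x + y + x * y)).
  { assert (0 <= a * u) by nra. assert (a * u <= 1) by nra.
    assert (a * u * x <= 1) by nra.
    assert (0 <= a * y) by nra.
    assert (a * u * y <= a) by (replace (a*u*y) with ((a*y)*u) by ring; nra).
    assert (0 <= x * y) by nra. assert (x * y <= 1) by nra.
    assert (a * u * (x * y) <= u) by (replace (a*u*(x*y)) with (u*(a*(x*y))) by ring; assert (a*(x*y) <= 1) by nra; nra).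
    nra. }
  assert (0 <= (1 - x) * (1 - y)) by nra.
  assert (0 <= a * ((1 - x) * (1 - y)) * (1 + a + u - a * u * (x + y + x * y))).
  { apply Rmult_le_pos; [apply Rmult_le_pos|]; lra. }
  lra.
Qed.

Lemma stepA e D N k d : 0 < e -> 0 < D ->
  ((k <= d /\ k + d <= N) \/ (d <= k /\ N <= k + d)) ->
  W e D N k <= W e D N d.
Proof.
  intros He HD H. unfold W.
  set (a := Ee e D 1). set (x := Ee e D k). set (y := Ee e D d). set (u := Ee e D (N - k - d)).
  assert (E1 : Ee e D (k + 1) = a * x) by (unfold a, x; rewrite Ee_add; apply Ee_ext; ring).
  assert (E2 : Ee e D (d + 1) = a * y) by (unfold a, y; rewrite Ee_add; apply Ee_ext; ring).
  assert (E3 : Ee e D (N - k + 1) = a * u * y) by (unfold a, y, u; rewrite !Ee_add; apply Ee_ext; ring).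
  assert (E4 : Ee e D (N - d + 1) = a * u * x) by (unfold a, x, u; rewrite !Ee_add; apply Ee_ext; ring).
  rewrite E1, E2, E3, E4.
  assert (Ha0 : 0 < a) by apply Ee_pos.
  assert (0 <= (x - y) * (1 - u)).
  { destruct H as [[H1 H2]|[H1 H2]].
    - apply Rmult_le_pos.
      + pose proof (Ee_le e D k d He HD H1). unfold x, y. lra.
      + pose proof (Ee_le1 e D (N - k - d) He HD ltac:(lra)). unfold u. lra.
    - pose proof (Ee_le e D d k He HD H1) as G1.
      pose proof (Ee_ge1 e D (N - k - d) He HD ltac:(lra)) as G2. fold x y u in G1, G2. nra.
  }
  nra.
Qed.

Lemma core e D N p p' k d : 0 < e -> 0 < D -> 0 <= p <= N -> 0 <= p' <= N -> 0 <= k ->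
  (p' = p + k \/ p = p' + k) ->
  ((k <= d /\ k + d <= N) \/ (d <= k /\ N <= k + d)) ->
  W e D N p' * W e D N 0 <= W e D N d * W e D N p.
Proof.
  intros He HD Hp Hp' Hk Hc Hkd.
  pose proof (stepA e D N k d He HD Hkd) as HA.
  destruct Hc as [ -> | -> ].
  - pose proof (stepB e D N p k He HD ltac:(lra) Hk ltac:(lra)).
    pose proof (W_pos e D N p He HD Hp). nra.
  - pose proof (stepB e D N (N - (p' + k)) k He HD ltac:(lra) Hk ltac:(lra)) as HB.
    rewrite W_sym in HB.
    replace (N - (p' + k) + k) with (N - p') in HB by ring.
    rewrite W_sym in HB.
    pose proof (W_pos e D N (p' + k) He HD Hp). nra.
Qed.

Lemma geo e D lo n : 0 < e -> 0 < D -> (lo <= 0)%Z ->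
  ((0 <= lo + Z.of_nat n)%Z ->
    (1 - Ee e D 1) * sum_f_R0 (fun i => Ee e D (IZR (Z.abs (lo + Z.of_nat i)))) n
    = 1 + Ee e D 1 - Ee e D (1 - IZR lo) - Ee e D (IZR (lo + Z.of_nat n) + 1)) /\
  ((lo + Z.of_nat n < 0)%Z ->
    (1 - Ee e D 1) * sum_f_R0 (fun i => Ee e D (IZR (Z.abs (lo + Z.of_nat i)))) n
    = Ee e D (- IZR (lo + Z.of_nat n)) - Ee e D (1 - IZR lo)).
Proof.
  intros He HD Hlo. induction n as [|n IH].
  - simpl. rewrite Z.add_0_r. split; intros H.
    + assert (lo = 0%Z) by lia. subst lo. simpl. rewrite Ee_0.
      rewrite (Ee_ext e D (1 - 0) 1) by ring. rewrite (Ee_ext e D (0 + 1) 1) by ring. ring.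
    + rewrite abs_IZR. rewrite Rabs_left by (apply IZR_lt; lia).
      rewrite (Ee_ext e D (1 - IZR lo) (1 + - IZR lo)) by ring. rewrite <- Ee_add. ring.
  - rewrite tech5. destruct IH as [IH1 IH2].
    assert (HS : IZR (lo + Z.of_nat (S n)) = IZR (lo + Z.of_nat n) + 1).
    { rewrite Nat2Z.inj_succ, <- Z.add_1_r, Z.add_assoc, plus_IZR. reflexivity. }
    rewrite abs_IZR, HS.
    destruct (Z_le_gt_dec 0 (lo + Z.of_nat n)) as [H0|H0].
    + split; intros H; [|lia].
      rewrite Rmult_plus_distr_l, IH1 by exact H0.
      assert (0 <= IZR (lo + Z.of_nat n)) by (apply IZR_le; lia).
      rewrite Rabs_right by lra.
      set (r := IZR (lo + Z.of_nat n)).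
      rewrite (Ee_ext e D (r + 1 + 1) (1 + (r + 1))) by ring. rewrite <- (Ee_add e D 1 (r+1)). ring.
    + destruct (Z.eq_dec (lo + Z.of_nat n) (-1)) as [Hm|Hm].
      * split; intros H; [|lia].
        rewrite Rmult_plus_distr_l, IH2 by lia. rewrite Hm.
        replace (IZR (-1) + 1) with 0 by (simpl; ring).
        rewrite Rabs_R0, Ee_0.
        rewrite (Ee_ext e D (- IZR (-1)) 1) by (simpl; ring).
        rewrite (Ee_ext e D (0 + 1) 1) by ring. ring.
      * split; intros H; [lia|].
        rewrite Rmult_plus_distr_l, IH2 by lia.
        assert (IZR (lo + Z.of_nat n) + 1 < 0).
        { replace (IZR (lo + Z.of_nat n) + 1) with (IZR (lo + Z.of_nat n + 1)) by (rewrite plus_IZR; reflexivity).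
          apply IZR_lt; lia. }
        rewrite Rabs_left by lra.
        set (r := IZR (lo + Z.of_nat n)).
        rewrite (Ee_ext e D (- r) (1 + - (r + 1))) by ring. rewrite <- (Ee_add e D 1). ring.
Qed.

Lemma powE e D n : Ee e D 1 ^ n = Ee e D (INR n).
Proof.
  induction n as [|n IH].
  - simpl. rewrite Ee_0. reflexivity.
  - simpl pow. rewrite IH, Ee_add. apply Ee_ext. rewrite S_INR. ring.
Qed.

Lemma powZ e D z : (0 <= z)%Z -> Ee e D 1 ^ Z.to_nat z = Ee e D (IZR z).
Proof. intros H. rewrite powE, INR_IZR_INZ, Z2Nat.id by exact H. reflexivity. Qed.

Lemma Tlem e D L U m : 0 < e -> 0 < D -> (L <= m <= U)%Z ->
  (1 - Ee e D 1) * zsum (L - m) (U - m) (fun l => exp (- IZR (Z.abs l) * e / D))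
  = W e D (IZR (U - L)) (IZR (m - L)).
Proof.
  intros He HD Hm. unfold zsum.
  destruct (geo e D (L - m) (Z.to_nat (U - m - (L - m))) He HD ltac:(lia)) as [G _].
  rewrite Z2Nat.id in G by lia.
  change (fun i : nat => exp (- IZR (Z.abs (L - m + Z.of_nat i)) * e / D))
    with (fun i : nat => Ee e D (IZR (Z.abs (L - m + Z.of_nat i)))).
  rewrite G by lia. unfold W.
  rewrite (Ee_ext e D (1 - IZR (L - m)) (IZR (m - L) + 1)) by (rewrite !minus_IZR; ring).
  rewrite (Ee_ext e D (IZR (L - m + (U - m - (L - m))) + 1) (IZR (U - L) - IZR (m - L) + 1))
    by (rewrite !plus_IZR, !minus_IZR; ring).
  reflexivity.
Qed.

Lemma div_aux q A B C Dd : 0 <= q -> 0 < A -> 0 < B -> 0 < C -> B * C <= Dd * A ->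
  q / A <= q * Dd / (B * C).
Proof.
  intros Hq HA HB HC H.
  apply (Rmult_le_reg_r (A * (B * C))). apply Rmult_lt_0_compat; [lra | apply Rmult_lt_0_compat; lra].
  replace (q / A * (A * (B * C))) with (q * (B * C)) by (field; lra).
  replace (q * Dd / (B * C) * (A * (B * C))) with (q * (Dd * A)) by (field; lra).
  apply Rmult_le_compat_l; lra.
Qed.

Theorem theoremS1 (X : Type) (n : nat) (L U Delta : Z) (M : Dataset X n -> Z)
    (eps eps' : R)
    (HLU : (L < U)%Z)
    (HDelta : (0 < Delta)%Z)
    (Hrange : forall D, (L <= M D <= U)%Z)
    (Hsens : forall D D', neighboring D D' -> (Z.abs (M D - M D') <= Delta)%Z)
    (Heps : 0 < eps) (Heps' : 0 < eps')
    (Hsol : eps' + ln (rgm_g L U Delta eps') = eps) :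
  forall (D D' : Dataset X n), neighboring D D' ->
  forall S : Z -> Prop,
    rgm_prob L U Delta eps' (M D) S <= exp eps * rgm_prob L U Delta eps' (M D') S.
Proof.
  intros D1 D2 Hn S.
  pose proof (Hsens D1 D2 Hn) as Hs.
  pose proof (Hrange D1) as R1. pose proof (Hrange D2) as R2.
  set (m := M D1) in *. set (m' := M D2) in *.
  set (Dl := IZR Delta).
  assert (HD : 0 < Dl) by (apply IZR_lt; exact HDelta).
  set (N := IZR (U - L)).
  set (dz := rgm_d L U Delta).
  assert (Hdz : (0 <= dz <= U - L /\ dz <= Delta)%Z) by (unfold dz, rgm_d; Z.div_mod_to_equations; lia).
  set (a := Ee eps' Dl 1).
  assert (Ha1 : a < 1) by (apply Ee_lt1; lra).
  assert (HW0 : W eps' Dl N 0 = 1 - Ee eps' Dl (IZR (U - L + 1))).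
  { unfold W. rewrite (Ee_ext eps' Dl (0 + 1) 1) by ring.
    rewrite (Ee_ext eps' Dl (N - 0 + 1) (IZR (U - L + 1))) by (unfold N; rewrite plus_IZR; ring).
    ring. }
  assert (Hg : rgm_g L U Delta eps' = W eps' Dl N (IZR dz) / W eps' Dl N 0).
  { unfold rgm_g. cbv zeta.
    replace (exp (- eps' / IZR Delta)) with a by (unfold a, Ee, Dl; f_equal; unfold Rdiv; ring).
    fold dz. unfold a. rewrite !powZ by lia.
    rewrite HW0. unfold W. f_equal.
    rewrite (Ee_ext eps' Dl (IZR (dz + 1)) (IZR dz + 1)) by (rewrite plus_IZR; ring).
    rewrite (Ee_ext eps' Dl (IZR (U - L + 1 - dz)) (N - IZR dz + 1))
      by (unfold N; rewrite !minus_IZR, !plus_IZR, !minus_IZR; ring).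
    reflexivity. }
  assert (HW0p : 0 < W eps' Dl N 0) by (apply W_pos; auto; unfold N; split; [lra| apply IZR_le; lia]).
  assert (HWdp : 0 < W eps' Dl N (IZR dz)) by (apply W_pos; auto; unfold N; split; apply IZR_le; lia).
  assert (Hexp : exp eps = Ee eps' Dl (- Dl) * (W eps' Dl N (IZR dz) / W eps' Dl N 0)).
  { rewrite <- Hsol, exp_plus, exp_ln.
    - rewrite Hg. f_equal. unfold Ee. f_equal. field. lra.
    - rewrite Hg. apply Rdiv_lt_0_compat; assumption. }
  assert (Hcore : W eps' Dl N (IZR (m' - L)) * W eps' Dl N 0
                  <= W eps' Dl N (IZR dz) * W eps' Dl N (IZR (m - L))).
  { apply (core eps' Dl N (IZR (m - L)) (IZR (m' - L)) (IZR (Z.abs (m - m'))) (IZR dz)); auto.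
    - unfold N; split; apply IZR_le; lia.
    - unfold N; split; apply IZR_le; lia.
    - apply IZR_le; lia.
    - destruct (Z_le_gt_dec m m').
      + left. rewrite <- plus_IZR. f_equal. lia.
      + right. rewrite <- plus_IZR. f_equal. lia.
    - assert (((Z.abs (m - m') <= dz /\ Z.abs (m - m') + dz <= U - L) \/
               (dz <= Z.abs (m - m') /\ U - L <= Z.abs (m - m') + dz))%Z) as Hd.
      { unfold dz, rgm_d in *. Z.div_mod_to_equations. lia. }
      unfold N. destruct Hd as [[H1 H2]|[H1 H2]]; [left|right]; split;
        try rewrite <- plus_IZR; apply IZR_le; lia. }
  assert (HT1 := Tlem eps' Dl L U m Heps' HD R1).
  assert (HT2 := Tlem eps' Dl L U m' Heps' HD R2).
  unfold rgm_prob, rgm_noise_pmf.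
  set (T1 := zsum (L - m) (U - m) _) in *.
  set (T2 := zsum (L - m') (U - m') _) in *.
  assert (HWp : 0 < W eps' Dl N (IZR (m - L))) by (apply W_pos; auto; unfold N; split; apply IZR_le; lia).
  assert (HWp' : 0 < W eps' Dl N (IZR (m' - L))) by (apply W_pos; auto; unfold N; split; apply IZR_le; lia).
  fold N in HT1, HT2.
  fold a in HT1, HT2.   assert (ET1 : T1 = W eps' Dl N (IZR (m - L)) / (1 - a)) by (rewrite <- HT1; field; lra).
  assert (ET2 : T2 = W eps' Dl N (IZR (m' - L)) / (1 - a)) by (rewrite <- HT2; field; lra).
  unfold zsum.
  replace (U - m - (L - m))%Z with (U - L)%Z by ring.
  replace (U - m' - (L - m'))%Z with (U - L)%Z by ring.
  rewrite scal_sum. apply sum_Rle. intros i Hi.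
  replace (m + (L - m + Z.of_nat i))%Z with (L + Z.of_nat i)%Z by ring.
  replace (m' + (L - m' + Z.of_nat i))%Z with (L + Z.of_nat i)%Z by ring.
  destruct (ClassicalEpsilon.excluded_middle_informative (S (L + Z.of_nat i)%Z)) as [_|_]; [|lra].
  change (Ee eps' Dl (IZR (Z.abs (L - m + Z.of_nat i)%Z)) / T1 <=
          Ee eps' Dl (IZR (Z.abs (L - m' + Z.of_nat i)%Z)) / T2 * exp eps).
  set (Xv := IZR (Z.abs (L - m + Z.of_nat i)%Z)).
  set (Yv := IZR (Z.abs (L - m' + Z.of_nat i)%Z)).
  assert (HXY : Ee eps' Dl Xv <= Ee eps' Dl (- Dl) * Ee eps' Dl Yv).
  { rewrite Ee_add. apply Ee_le; auto. unfold Xv, Yv, Dl.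
    rewrite <- opp_IZR, <- plus_IZR. apply IZR_le. lia. }
  rewrite ET1, ET2, Hexp.
  set (Wp := W eps' Dl N (IZR (m - L))) in *.
  set (Wp' := W eps' Dl N (IZR (m' - L))) in *.
  set (Wd := W eps' Dl N (IZR dz)) in *.
  set (W0 := W eps' Dl N 0) in *.
  apply Rle_trans with ((Ee eps' Dl (- Dl) * Ee eps' Dl Yv * (1 - a)) / Wp).
  - replace (Ee eps' Dl Xv / (Wp / (1 - a))) with (Ee eps' Dl Xv * (1 - a) / Wp) by (field; lra).
    unfold Rdiv. apply Rmult_le_compat_r. left; apply Rinv_0_lt_compat; lra.
    apply Rmult_le_compat_r; lra.
  - replace (Ee eps' Dl Yv / (Wp' / (1 - a)) * (Ee eps' Dl (- Dl) * (Wd / W0)))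
      with ((Ee eps' Dl (- Dl) * Ee eps' Dl Yv * (1 - a)) * Wd / (Wp' * W0)) by (field; lra).
    apply div_aux; auto.
    pose proof (Ee_pos eps' Dl (- Dl)). pose proof (Ee_pos eps' Dl Yv).
    apply Rmult_le_pos; [|lra]. apply Rmult_le_pos; lra.
Qed.
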